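(* Let $X$ and $Y$ be words in the free $\mathbb{C}$-algebra $\mathcal{A}$ on $L,R$. Then $X\sim Y$ if and only if there is a sequence of swaps between $X$ and $Y$.
   Context: $\mathcal{A}$ is the free associative $\mathbb{C}$-algebra on noncommuting generators $L,R$; words are finite products of these letters (including the empty word). A word is balanced if it contains equally many $L$'s and $R$'s. Let $S=\{FG-GF : F,G \text{ nonempty balanced words}\}$ and $\mathcal{J}$ the two-sided ideal generated by $S$; for words $X,Y$, $X\sim Y$ means $X-Y\in\mathcal{J}$. If $F,G$ are nonempty balanced words and $W_1,W_2$ are words, the words $W_1FGW_2$ and $W_1GFW_2$ are said to be related by a swap (of type $(F,G)$, which is the same as type $(G,F)$). A sequence of swaps between $X$ and $Y$ is a finite sequence of words $Z_1=X,Z_2,\dots,Z_k=Y$ such that $Z_i$ and $Z_{i+1}$ are related by a swap for each $1\le i\le k-1$. *)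

(* Defs.v *)
From HB Require Import structures.
From mathcomp Require Import all_boot all_order all_algebra.
From mathcomp Require Import complex.
From mathcomp Require Import Rstruct.
From Stdlib Require Rdefinitions.
Set Implicit Arguments. Unset Strict Implicit. Unset Printing Implicit Defensive.
Import Order.TTheory GRing.Theory Num.Theory.
Local Open Scope ring_scope.

Definition CC : fieldType := (Rdefinitions.R)[i].

Definition letter := bool.
Definition lL : letter := true.
Definition lR : letter := false.
Definition word := seq letter.

Definition balanced (w : word) : bool := count (pred1 lL) w == count (pred1 lR) w.

(** The free associative C-algebra A on L, R: elements are C-valued functions
    on words with finite support (equivalently, support of bounded length,
    since there are finitely many words of each length). *)
Definition fun_word := word -> CC.
Definition inA (f : fun_word) : Prop :=
  exists n : nat, forall w : word, (n <= size w)%N -> f w = 0.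

Definition addA (f g : fun_word) : fun_word := fun w => f w + g w.
Definition oppA (f : fun_word) : fun_word := fun w => - f w.
Definition zeroA : fun_word := fun _ => 0.
Definition mulA (f g : fun_word) : fun_word :=
  fun w => \sum_(i < (size w).+1) f (take i w) * g (drop i w).

Definition wordA (u : word) : fun_word := fun w => if w == u then 1 else 0.

Definition is_two_sided_ideal (I : fun_word -> Prop) : Prop :=
  [/\ (forall x, I x -> inA x),
      I zeroA,
      (forall x y, I x -> I y -> I (addA x y)) &
      (forall a x b, inA a -> inA b -> I x -> I (mulA (mulA a x) b))].

Definition inS (x : fun_word) : Prop :=
  exists F G : word,
    [/\ F != [::], G != [::], balanced F, balanced G &
        x = addA (wordA (F ++ G)) (oppA (wordA (G ++ F)))].

Definition inJ (x : fun_word) : Prop :=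
  forall I, is_two_sided_ideal I -> (forall s, inS s -> I s) -> I x.

Definition simJ (X Y : word) : Prop := inJ (addA (wordA X) (oppA (wordA Y))).

Definition swap_related (X Y : word) : Prop :=
  exists W1 W2 F G : word,
    [/\ F != [::], G != [::], balanced F, balanced G &
        X = W1 ++ F ++ G ++ W2 /\ Y = W1 ++ G ++ F ++ W2].

Definition swap_sequence (X Y : word) : Prop :=
  exists (k : nat) (Z : nat -> word),
    [/\ Z 0%N = X, Z k = Y & forall i, (i < k)%N -> swap_related (Z i) (Z i.+1)].

(* Main.v *)
From Stdlib Require Import FunctionalExtensionality ClassicalEpsilon.
From mathcomp Require Import all_boot all_order all_algebra.
From mathcomp Require Import zify.
Require Import Defs.
Set Implicit Arguments. Unset Strict Implicit. Unset Printing Implicit Defensive.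
Import GRing.Theory.
Local Open Scope ring_scope.

Definition ssimb (v w : word) : bool :=
  if excluded_middle_informative (swap_sequence v w) then true else false.

Lemma ssimbP v w : reflect (swap_sequence v w) (ssimb v w).
Proof. by rewrite /ssimb; case: excluded_middle_informative => H; constructor. Qed.

Lemma ss_refl X : swap_sequence X X.
Proof. by exists 0%N, (fun _ => X); split => // i; rewrite ltn0. Qed.

Lemma sr_sym X Y : swap_related X Y -> swap_related Y X.
Proof.
move=> [W1 [W2 [F [G [hF hG bF bG [-> ->]]]]]].
by exists W1, W2, G, F.
Qed.

Lemma ss_sym X Y : swap_sequence X Y -> swap_sequence Y X.
Proof.
move=> [k [Z [h0 hk hs]]].
exists k, (fun i => Z (k - i)%N); split.
- by rewrite subn0.
- by rewrite subnn.
- move=> i hi. apply: sr_sym.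
  have -> : (k - i = (k - i.+1).+1)%N by lia.
  apply: hs. lia.
Qed.

Lemma ss_trans X Y W : swap_sequence X Y -> swap_sequence Y W -> swap_sequence X W.
Proof.
move=> [k1 [Z1 [a1 b1 c1]]] [k2 [Z2 [a2 b2 c2]]].
exists (k1 + k2)%N, (fun i => if (i <= k1)%N then Z1 i else Z2 (i - k1)%N); split.
- by [].
- case: ifP => h.
  + have e : k2 = 0%N by lia.
    by rewrite e addn0 b1 -a2 -e b2.
  + by rewrite addKn.
- move=> i hi /=. case: (ltnP i k1) => h.
  + rewrite (ltnW h); exact: c1.
  + have E1 : (if (i <= k1)%N then Z1 i else Z2 (i - k1)%N) = Z2 (i - k1)%N.
      case: ifP => // h'.
      have e : i = k1 by apply/eqP; rewrite eqn_leq h h'.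
      by rewrite e subnn b1 a2.
    rewrite E1.
    rewrite subSn //; apply: c2; lia.
Qed.

Lemma sr_catl u v v' : swap_related v v' -> swap_related (u ++ v) (u ++ v').
Proof.
move=> [W1 [W2 [F [G [hF hG bF bG [-> ->]]]]]].
by exists (u ++ W1), W2, F, G; split => //; split; rewrite -catA.
Qed.

Lemma sr_catr s v v' : swap_related v v' -> swap_related (v ++ s) (v' ++ s).
Proof.
move=> [W1 [W2 [F [G [hF hG bF bG [-> ->]]]]]].
by exists W1, (W2 ++ s), F, G; split => //; split; rewrite -!catA.
Qed.

Lemma ss_catl u v v' : swap_sequence v v' -> swap_sequence (u ++ v) (u ++ v').
Proof.
move=> [k [Z [h0 hk hs]]]; exists k, (fun i => u ++ Z i); split.
- by rewrite h0.
- by rewrite hk.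
- by move=> i hi; apply: sr_catl; apply: hs.
Qed.

Lemma ss_catr s v v' : swap_sequence v v' -> swap_sequence (v ++ s) (v' ++ s).
Proof.
move=> [k [Z [h0 hk hs]]]; exists k, (fun i => Z i ++ s); split.
- by rewrite h0.
- by rewrite hk.
- by move=> i hi; apply: sr_catr; apply: hs.
Qed.

Lemma sr_ss X Y : swap_related X Y -> swap_sequence X Y.
Proof.
move=> h; exists 1%N, (fun i => if i is 0%N then X else Y); split => //.
by move=> i; rewrite ltnS leqn0 => /eqP ->.
Qed.

Fixpoint wl (n : nat) : seq word :=
  if n is m.+1 then [seq true :: w | w <- wl m] ++ [seq false :: w | w <- wl m]
  else [:: [::]].

Lemma mem_consmap (b c : bool) (w : word) (s : seq word) :
  (b :: w \in [seq c :: x | x <- s]) = (b == c) && (w \in s).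
Proof.
apply/mapP/andP => [[x hx [-> ->]] | [/eqP -> hw]]; first by rewrite eqxx.
by exists w.
Qed.

Lemma nil_consmap (c : bool) (s : seq word) : ([::] \in [seq c :: x | x <- s]) = false.
Proof. by apply/negbTE/negP => /mapP[x _ H]. Qed.

Lemma mem_wl n w : (w \in wl n) = (size w == n).
Proof.
elim: n w => [|n IH] [|b w] //=.
- by rewrite mem_cat !nil_consmap.
- rewrite mem_cat !mem_consmap eqSS -IH.
  by case: b => /=; rewrite ?andbF ?orbF.
Qed.

Lemma cons_inj (b : bool) : injective (cons b).
Proof. by move=> x y []. Qed.

Lemma uniq_wl n : uniq (wl n).
Proof.
elim: n => [|n IH] //=.
rewrite cat_uniq !map_inj_uniq ?IH //; try exact: cons_inj.
rewrite /= andbT; apply/hasPn => x /mapP[w _ ->].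
by rewrite mem_consmap.
Qed.

Lemma sum_wl_split i j (g : word -> CC) :
  \sum_(w <- wl (i + j)) g w = \sum_(u <- wl i) \sum_(v <- wl j) g (u ++ v).
Proof.
elim: i g => [|i IH] g; first by rewrite add0n /= big_cons big_nil addr0.
rewrite addSn [wl (i + j).+1]/= [wl i.+1]/= !big_cat !big_map /=.
by rewrite !IH.
Qed.

Definition cls (Z : word) (f : fun_word) : CC :=
  \sum_(w <- wl (size Z) | ssimb w Z) f w.

Lemma count_split (T : Type) (p q : pred T) s :
  count p s = (count (fun x => p x && q x) s + count (fun x => p x && ~~ q x) s)%N.
Proof. elim: s => //= x s ->; case: (p x); case: (q x) => /=; lia. Qed.

Lemma closed_sum (y : fun_word) (Hy : forall V, cls V y = 0) m (P : pred word) :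
  (forall v v', P v -> ssimb v v' -> P v') -> \sum_(w <- wl m | P w) y w = 0.
Proof.
move: {2}(count P (wl m)) (leqnn (count P (wl m))) => k.
elim: k P => [|k IH] P Hk HP.
  by rewrite big_hasC // has_count -leqNgt.
case: (boolP (has P (wl m))) => hP; last by rewrite big_hasC.
case/hasP: hP => v0 hv0 Pv0.
rewrite (bigID (fun w => ssimb w v0)) /=.
have -> : \sum_(w <- wl m | P w && ssimb w v0) y w = 0.
  transitivity (cls v0 y); last exact: Hy.
  move: hv0; rewrite mem_wl => /eqP hs.
  rewrite /cls hs; apply: eq_bigl => w.
  apply/andP/idP => [[]//|h]; split => //.
  apply: HP Pv0 _; apply/ssimbP; apply: ss_sym; exact/ssimbP.
rewrite add0r; apply: IH.
  have h1 : (0 < count (fun w => P w && ssimb w v0) (wl m))%N.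
    rewrite -has_count; apply/hasP; exists v0 => //.
    by rewrite Pv0; apply/ssimbP/ss_refl.
  have := count_split P (fun w => ssimb w v0) (wl m); rewrite /=; lia.
move=> v v' /andP[Pv nv] hvv'; rewrite (HP v v' Pv hvv') /=.
apply/negP => hv'; apply: (negP nv); apply/ssimbP.
exact: ss_trans (ssimbP _ _ hvv') (ssimbP _ _ hv').
Qed.

Lemma cls_conv Z (F : word -> word -> CC) :
  (forall i j, \sum_(w <- wl (i + j) | ssimb w Z) F (take i w) (drop i w) = 0) ->
  cls Z (fun w => \sum_(i < (size w).+1) F (take i w) (drop i w)) = 0.
Proof.
move=> H; rewrite /cls.
transitivity (\sum_(w <- wl (size Z) | ssimb w Z)
                \sum_(i < (size Z).+1) F (take i w) (drop i w)).
  rewrite big_seq_cond [RHS]big_seq_cond; apply: eq_bigr => w /andP[hw _].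
  by move: hw; rewrite mem_wl => /eqP ->.
rewrite exchange_big; rewrite big1 // => -[i hi] _ /=.
have hi' : (i <= size Z)%N by rewrite -ltnS.
rewrite -(subnKC hi'); exact: H.
Qed.

Lemma cls_mull (a y : fun_word) (Hy : forall V, cls V y = 0) Z : cls Z (mulA a y) = 0.
Proof.
apply: (@cls_conv Z (fun u v => a u * y v)) => i j.
rewrite big_mkcond sum_wl_split big_seq; rewrite big1 // => u hu.
have su : size u = i by apply/eqP; rewrite -mem_wl.
transitivity (a u * \sum_(v <- wl j | ssimb (u ++ v) Z) y v).
  rewrite mulr_sumr [RHS]big_mkcond; apply: eq_bigr => v _.
  rewrite (take_size_cat _ su) (drop_size_cat _ su).
  by case: ifP => _; rewrite ?mulr0.
rewrite (@closed_sum y Hy j (fun v => ssimb (u ++ v) Z)) ?mulr0 //.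
move=> v v' /ssimbP h1 /ssimbP h2; apply/ssimbP.
exact: ss_trans (ss_sym (ss_catl u h2)) h1.
Qed.

Lemma cls_mulr (y b : fun_word) (Hy : forall V, cls V y = 0) Z : cls Z (mulA y b) = 0.
Proof.
apply: (@cls_conv Z (fun u v => y u * b v)) => i j.
rewrite big_mkcond sum_wl_split exchange_big big_seq; rewrite big1 // => v hv.
transitivity ((\sum_(u <- wl i | ssimb (u ++ v) Z) y u) * b v).
  rewrite mulr_suml [RHS]big_mkcond big_seq [RHS]big_seq; apply: eq_bigr => u hu.
  have su : size u = i by apply/eqP; rewrite -mem_wl.
  rewrite (take_size_cat _ su) (drop_size_cat _ su).
  by case: ifP => _; rewrite ?mul0r.
rewrite (@closed_sum y Hy i (fun u => ssimb (u ++ v) Z)) ?mul0r //.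
move=> u u' /ssimbP h1 /ssimbP h2; apply/ssimbP.
exact: ss_trans (ss_sym (ss_catr v h2)) h1.
Qed.

Lemma inA_mul f g : inA f -> inA g -> inA (mulA f g).
Proof.
move=> [n1 h1] [n2 h2]; exists (n1 + n2)%N => w hw.
rewrite /mulA; rewrite big1 // => -[i hi] _ /=.
have hi' : (i <= size w)%N by rewrite -ltnS.
case: (leqP n1 i) => hn.
  by rewrite h1 ?mul0r // size_takel.
by rewrite h2 ?mulr0 // size_drop; lia.
Qed.

Lemma inA_add f g : inA f -> inA g -> inA (addA f g).
Proof.
move=> [n1 h1] [n2 h2]; exists (n1 + n2)%N => w hw.
rewrite /addA h1 ?h2 ?addr0 //; lia.
Qed.

Lemma inA_opp f : inA f -> inA (oppA f).
Proof. by move=> [n h]; exists n => w hw; rewrite /oppA h ?oppr0. Qed.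

Lemma inA_wordA u : inA (wordA u).
Proof.
exists (size u).+1 => w hw; rewrite /wordA; case: eqP => // E.
by rewrite E ltnn in hw.
Qed.

Lemma cls_add Z f g : cls Z (addA f g) = cls Z f + cls Z g.
Proof. by rewrite /cls /addA big_split. Qed.

Lemma cls_zero Z : cls Z zeroA = 0.
Proof. by rewrite /cls /zeroA big1. Qed.

Lemma sum_wordA (s : seq word) (P : pred word) x : uniq s ->
  \sum_(w <- s | P w) wordA x w = if (x \in s) && P x then 1 else 0.
Proof.
elim: s => [|a s IH] /=; first by rewrite big_nil.
move=> /andP[na us]; rewrite big_cons IH // inE /wordA.
case: (eqVneq a x) => [<-|ne].
  rewrite (negbTE na) /=.
  by case: (P a); rewrite ?addr0.
rewrite /=.
by case: (P a); rewrite ?add0r.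
Qed.

Lemma cls_diff Z u v : cls Z (addA (wordA u) (oppA (wordA v))) =
  (if (u \in wl (size Z)) && ssimb u Z then 1 else 0) -
  (if (v \in wl (size Z)) && ssimb v Z then 1 else 0).
Proof.
rewrite /cls /addA /oppA big_split sumrN !sum_wordA //; exact: uniq_wl.
Qed.

Lemma mulA_addr f g h : mulA f (addA g h) = addA (mulA f g) (mulA f h).
Proof.
apply: functional_extensionality => w; rewrite /mulA /addA -big_split.
by apply: eq_bigr => i _; rewrite mulrDr.
Qed.

Lemma mulA_addl f g h : mulA (addA f g) h = addA (mulA f h) (mulA g h).
Proof.
apply: functional_extensionality => w; rewrite /mulA /addA -big_split.
by apply: eq_bigr => i _; rewrite mulrDl.
Qed.

Lemma mulA_oppr f g : mulA f (oppA g) = oppA (mulA f g).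
Proof.
apply: functional_extensionality => w; rewrite /mulA /oppA -sumrN.
by apply: eq_bigr => i _; rewrite mulrN.
Qed.

Lemma mulA_oppl f g : mulA (oppA f) g = oppA (mulA f g).
Proof.
apply: functional_extensionality => w; rewrite /mulA /oppA -sumrN.
by apply: eq_bigr => i _; rewrite mulNr.
Qed.

Lemma mulA_words u v : mulA (wordA u) (wordA v) = wordA (u ++ v).
Proof.
apply: functional_extensionality => w; rewrite /mulA /wordA.
case: (eqVneq w (u ++ v)) => [->|ne].
  have hu : (size u < (size (u ++ v)).+1)%N by rewrite ltnS size_cat leq_addr.
  rewrite (bigD1 (Ordinal hu)) //.
  rewrite take_size_cat // drop_size_cat // !eqxx mulr1 big1; first exact: addr0.
  move=> i ne.
  case: eqP => [ht|_]; last by rewrite mul0r.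
  exfalso; move/negP: ne; apply; apply/eqP/val_inj => /=.
  have hi : (i <= size (u ++ v))%N by rewrite -ltnS.
  by move: (congr1 size ht); rewrite size_takel.
rewrite big1 // => i _.
case: eqP => [ht|_]; last by rewrite mul0r.
case: eqP => [hd|_]; last by rewrite mulr0.
by rewrite -(cat_take_drop i w) ht hd eqxx in ne.
Qed.

Lemma inJ_add f g : inJ f -> inJ g -> inJ (addA f g).
Proof.
move=> hf hg I hI hS; case: (hI) => _ _ ha _.
by apply: ha; [exact: hf | exact: hg].
Qed.

Lemma sr_inJ X Y : swap_related X Y -> inJ (addA (wordA X) (oppA (wordA Y))).
Proof.
move=> [W1 [W2 [F [G [hF hG bF bG [-> ->]]]]]] I hI hS.
have hs : I (addA (wordA (F ++ G)) (oppA (wordA (G ++ F)))).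
  by apply: hS; exists F, G.
case: hI => _ _ _ hm.
have := hm (wordA W1) _ (wordA W2) (inA_wordA _) (inA_wordA _) hs.
by rewrite mulA_addr mulA_oppr !mulA_words mulA_addl mulA_oppl !mulA_words -!catA.
Qed.

Theorem proposition3p2 (X Y : word) : simJ X Y <-> swap_sequence X Y.
Proof.
split.
- move=> hJ.
  pose I f := inA f /\ forall Z, cls Z f = 0.
  have hI : is_two_sided_ideal I.
    split.
    + by move=> x [].
    + split; last by move=> Z; exact: cls_zero.
      by exists 0%N.
    + move=> x y [ax cx] [ay cy]; split; first exact: inA_add.
      by move=> Z; rewrite cls_add cx cy addr0.
    + move=> a x b ia ib [ix cx]; split.
        by apply: inA_mul => //; exact: inA_mul.
      move=> Z; apply: cls_mulr => V; exact: cls_mull.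
  have hS : forall s, inS s -> I s.
    move=> s [F [G [hF hG bF bG ->]]]; split.
      by apply: inA_add; [exact: inA_wordA | apply: inA_opp; exact: inA_wordA].
    move=> Z; rewrite cls_diff !mem_wl !size_cat addnC.
    have e : swap_sequence (F ++ G) (G ++ F).
      by apply: sr_ss; exists [::], [::], F, G; split => //; rewrite /= !cats0.
    have -> : ssimb (G ++ F) Z = ssimb (F ++ G) Z.
      apply/ssimbP/ssimbP => h; [exact: ss_trans e h | exact: ss_trans (ss_sym e) h].
    by rewrite subrr.
  have [_ ] := hJ I hI hS.
  move=> /(_ X); rewrite cls_diff mem_wl eqxx /=.
  have -> : ssimb X X = true by apply/ssimbP/ss_refl.
  case: ifP => [/andP[_ /ssimbP h] _|_]; first exact: ss_sym.
  by rewrite subr0 => h1; move: (@oner_neq0 CC); rewrite h1 eqxx.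
- move=> [k [Z [h0 hk hs]]].
  suff H : forall i, (i <= k)%N -> simJ X (Z i) by rewrite -hk; exact: H.
  elim => [_|i IH hi].
    rewrite h0 => I [_ h _ _] _.
    suff -> : addA (wordA X) (oppA (wordA X)) = zeroA by [].
    by apply: functional_extensionality => w; rewrite /addA /oppA /zeroA subrr.
  have := inJ_add (IH (ltnW hi)) (sr_inJ (hs i hi)).
  suff -> : addA (addA (wordA X) (oppA (wordA (Z i))))
              (addA (wordA (Z i)) (oppA (wordA (Z i.+1))))
            = addA (wordA X) (oppA (wordA (Z i.+1))) by [].
  by apply: functional_extensionality => w; rewrite /addA /oppA addrA subrK.
Qed.
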